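(* Let $n\geq 2$ and let $P$ be a set of $n$ points equally spaced on a circle. There is a tree spanner on $P$ with dilation at most $\frac{2n}{\pi}+\frac{\pi}{2n}$.
   Context: A tree spanner on $P$ is a spanning tree on vertex set $P$ whose edges are weighted by the Euclidean distance between their endpoints. Its dilation is $\max\{ d_G(p,p')/|pp'| : p\neq p'\in P\}$, where $d_G$ is the shortest-path distance in the tree and $|pp'|$ the Euclidean distance. *)

(* Defs.v *)
From mathcomp Require Import all_boot all_order all_algebra.
From mathcomp Require Import all_classical all_reals all_analysis.
Set Implicit Arguments. Unset Strict Implicit. Unset Printing Implicit Defensive.
Import Order.TTheory GRing.Theory Num.Theory.
Local Open Scope ring_scope.
Local Open Scope classical_set_scope.

Section TreeSpanner.
Variable R : realType.

Definition edist (p q : R * R) : R :=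
  Num.sqrt ((p.1 - q.1) ^+ 2 + (p.2 - q.2) ^+ 2).

Definition circ_pts (n : nat) (a b r th : R) (k : 'I_n) : R * R :=
  (a + r * cos (th + 2 * pi * k%:R / n%:R),
   b + r * sin (th + 2 * pi * k%:R / n%:R)).

(* A spanning tree on the vertex set 'I_n : a simple undirected graph
   (symmetric, irreflexive edge relation) that is connected and has
   exactly n-1 edges (each edge counted twice as an ordered pair). *)
Definition is_spanning_tree (n : nat) (e : rel 'I_n) : Prop :=
  [/\ symmetric e, irreflexive e, (forall i j, connect e i j) &
      #|[set p : 'I_n * 'I_n | e p.1 p.2]| = (n.-1).*2].

Definition walk_len (n : nat) (f : 'I_n -> R * R) (i : 'I_n) (s : seq 'I_n) : R :=
  \sum_(d <- pairmap (fun x y => edist (f x) (f y)) i s) d.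

Definition tree_dist (n : nat) (e : rel 'I_n) (f : 'I_n -> R * R) (i j : 'I_n) : R :=
  inf [set l : R | exists s : seq 'I_n,
         [/\ path e i s, last i s = j & l = walk_len f i s]].

Definition dilation (n : nat) (e : rel 'I_n) (f : 'I_n -> R * R) : R :=
  \big[Num.max/0]_(p : 'I_n * 'I_n | p.1 != p.2)
     (tree_dist e f p.1 p.2 / edist (f p.1) (f p.2)).

End TreeSpanner.

(* Main.v *)
Require Import Defs.
From mathcomp Require Import all_boot all_order all_algebra.
From mathcomp Require Import all_classical all_reals all_analysis.
Import Order.TTheory GRing.Theory Num.Theory.
Local Open Scope ring_scope.
From mathcomp Require Import ring lra.
Import numFieldNormedType.Exports.

Lemma sin_abs_lb (R : realType) (x0 w : R) : 0 < x0 -> x0 <= `|w| -> `|w| < pi / 2 ->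
  0 < sin x0 <= `|sin w| /\ 0 < cos w.
Proof.
move=> x00 h1 h2.
have pi0 : (0 : R) < pi := pi_gt0 R.
have e : `|sin w| = sin `|w|.
  have := h2; rewrite ltr_norml => /andP[hl hr].
  case: (ger0P w) => hw.
    by rewrite ger0_norm // sin_ge0_pi //; lra.
  rewrite sinN ler0_norm //.
  have : 0 <= sin (- w) by apply: sin_ge0_pi; lra.
  rewrite sinN; lra.
split; last by apply: cos_gt0_pihalf; move: h2; rewrite ltr_norml; lra.
rewrite e; apply/andP; split; first by apply: sin_gt0_pihalf; lra.
rewrite leNgt; apply/negP; rewrite ltr_sin ?in_itv /=; first by lra.
  apply/andP; split; lra.
apply/andP; split; lra.
Qed.
Lemma chord (R : realType) (a b r s d : R) : 0 <= r ->
  Num.sqrt ((a + r * cos (s + d) - (a + r * cos (s - d))) ^+ 2 +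
            (b + r * sin (s + d) - (b + r * sin (s - d))) ^+ 2) =
  2 * r * `|sin d|.
Proof.
move=> r0.
rewrite cosD cosB sinD sinB.
have -> : (a + r * (cos s * cos d - sin s * sin d) - (a + r * (cos s * cos d + sin s * sin d))) ^+ 2 +
   (b + r * (sin s * cos d + cos s * sin d) - (b + r * (sin s * cos d - cos s * sin d))) ^+ 2 =
   (2 * r * sin d) ^+ 2 * (cos s ^+ 2 + sin s ^+ 2) by ring.
rewrite cos2Dsin2 mulr1 sqrtr_sqr normrM (ger0_norm (x := 2 * r)) //.
by rewrite mulr_ge0.
Qed.

Lemma edist_circ (R : realType) n (a b r th : R) (i j : 'I_n) : 0 <= r ->
  Defs.edist (circ_pts a b r th i) (circ_pts a b r th j) =
  2 * r * `|sin (pi * (i%:R - j%:R) / n%:R)|.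
Proof.
move=> r0.
rewrite /Defs.edist /circ_pts /= -(@chord _ a b r (th + pi * (i%:R + j%:R) / n%:R)) //.
congr (Num.sqrt ((a + r * cos _ - (a + r * cos _)) ^+ 2 + (b + r * sin _ - (b + r * sin _)) ^+ 2)); field.
all: by rewrite pnatr_eq0 -lt0n (leq_ltn_trans _ (ltn_ord i)).

Qed.
Lemma walk_len_ge0 (R : realType) n (f : 'I_n -> R * R) i s : 0 <= walk_len f i s.
Proof.
elim: s i => [|x s IH] i; rewrite /walk_len /= ?big_nil ?big_cons //.
by rewrite addr_ge0 ?sqrtr_ge0 // IH.
Qed.

Lemma td_le (R : realType) n (e : rel 'I_n) (f : 'I_n -> R * R) i s :
  path e i s -> tree_dist e f i (last i s) <= walk_len f i s.
Proof.
move=> hp; rewrite /tree_dist; apply: ge_inf.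
  exists 0 => y [s' [_ _ ->]]; exact: walk_len_ge0.
by exists s.
Qed.

Lemma card_star m :
  #|[set p : 'I_m.+1 * 'I_m.+1 | (fun i j : 'I_m.+1 => (i != j) && ((i == ord0) || (j == ord0))) p.1 p.2]|
  = ((m.+1).-1).*2.
Proof.
have -> : [set p : 'I_m.+1 * 'I_m.+1 | (fun i j : 'I_m.+1 => (i != j) && ((i == ord0) || (j == ord0))) p.1 p.2]
  = finset.setX [set~ ord0] [set ord0] :|: finset.setX [set ord0] [set~ ord0].
  apply/setP => -[i j]; rewrite !inE /=.
  case: (i =P ord0) => [->|/eqP hi]; case: (j =P ord0) => [->|/eqP hj];
    rewrite ?eqxx ?hi ?hj ?andbT ?andbF ?orbF //= eq_sym ?hi ?hj //.


rewrite cardsU (_ : _ :&: _ = finset.set0); last first.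
  apply/setP => -[i j]; rewrite !inE /=.
  by case: (i == ord0); case: (j == ord0).
by rewrite cards0 !cardsX cardsC1 cards1 card_ord /= muln1 mul1n subn0 addnn.
Qed.

Section Trig.
Variable R : realType.

Lemma sin_pair_pos (x : R) d : 0 < x < 2 ->
  0 < sin_coeff' x (0 + d.*2)%N + sin_coeff' x (0 + d.*2.+1)%N.
Proof.
move=> /andP[x_gt0 x_lt2].

rewrite /sin_coeff' 2!exprzD_nat (exprSz _ d.*2) -[in (-1) ^ d.*2](muln2 d).
rewrite -(exprnP _ (d * 2)) (exprM (-1)) sqrr_sign 2!mulr1 -exprSzr.
rewrite !add0n !mul1r mulN1r -[d.*2.+1]addn1 doubleD -addSn exprD.
rewrite -(ffact_fact (leq_addl _ _)) addnK.
rewrite mulNr -!mulrA -mulrBr mulr_gt0 ?exprn_gt0 //.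
set u := _.+1.
rewrite natrM invfM.
rewrite -[X in _ < X - _]mul1r !mulrA -mulrBl divr_gt0 // subr_gt0.
set v := _ ^_ _; rewrite -[ltRHS](divff (_ : v%:R != 0)); last first.
  by rewrite lt0r_neq0 // (ltr_nat _ 0) ffact_gt0 leq_addl.
rewrite ltr_pM2r; last by rewrite invr_gt0 (ltr_nat _ 0) ffact_gt0 leq_addl.
rewrite {}/v !addnS addn0 !ffactnS ffactn0 muln1 /= natrM.
by rewrite (ltr_pM (ltW _ ) (ltW _)) // (lt_le_trans x_lt2) // ler_nat.
Qed.

Lemma sin_lb (x : R) : 0 < x < 2 -> x - x ^+ 3 / 6 < sin x.
Proof.
move=> hx.
have sinx := @cvg_sin_coeff' _ x.
rewrite -(cvg_lim (@Rhausdorff R) sinx).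
have -> : x - x ^+ 3 / 6 = \sum_(0 <= i < 2) sin_coeff' x i.
  rewrite big_nat_recr //= big_nat_recr //= big_nil /sin_coeff'.
  rewrite expr0z expr1z /=. rewrite !factS fact0 /=. 
  rewrite add0r mul1r. rewrite expr1 divr1. rewrite mulN1r. by rewrite mulNr.
apply: lt_sum_lim_series; first by move/cvgP in sinx.
move=> d.
have := sin_pair_pos x d.+1 hx.
by rewrite !add0n (_ : (2 + d.*2 = d.+1.*2)%N) // doubleS.
Qed.
Lemma K_bound (n : nat) : (2 <= n)%N ->
  (sin (pi / (2 * n%:R) : R))^-1 <= 2 * n%:R / pi + pi / (2 * n%:R).
Proof.
move=> hn.
have n2 : (2 : R) <= n%:R by rewrite (ler_nat R 2 n).
have pi4 : (pi : R) < 4 by have := @pihalf_lt2 R; lra.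
have pi0 : (0 : R) < pi := pi_gt0 R.
set x := pi / (2 * n%:R).
have n0 : (0 : R) < 2 * n%:R by lra.
have x0 : 0 < x by rewrite /x divr_gt0.
have x1 : x < 1 by rewrite /x ltr_pdivrMr //; lra.
have -> : 2 * n%:R / pi = x^-1 by rewrite /x invf_div.
have sx := @sin_lb x ltac:(apply/andP; split; lra).
have x3 : x ^+ 3 <= x.
  have x2 : x ^+ 2 <= 1 by rewrite expr_le1 //; lra.
  by rewrite exprS ler_piMr //; lra.
have sx0 : 0 < sin x by lra.
rewrite -[(sin x)^-1]mul1r ler_pdivrMr //.
have e : (x^-1 + x) * (x - x ^+ 3 / 6) = 1 + x^+2 * (5/6 - x^+2/6).
  by field; rewrite gt_eqF.
have h2 : 1 <= (x^-1 + x) * (x - x ^+ 3 / 6).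
  rewrite e lerDl mulr_ge0 ?sqr_ge0 //.
  have : x ^+ 2 <= 1 by rewrite expr_le1 //; lra.
  lra.
apply: le_trans h2 _; apply: ler_wpM2l; last exact: ltW.
by rewrite addr_ge0 ?invr_ge0 // ltW.
Qed.
Lemma sin2 (u : R) : sin (u *+ 2) = 2 * sin u * cos u.
Proof. by rewrite sin_mulr2n mulr2n; ring. Qed.

Lemma key (n p q : nat) : (p < n)%N -> (q < n)%N -> p != q ->
  `|sin (pi * (p%:R - 0) / n%:R)| + `|sin (pi * (0 - q%:R) / n%:R)| <=
    (sin (pi / (2 * n%:R) : R))^-1 * `|sin (pi * (p%:R - q%:R) / n%:R)|
  /\ 0 < `|sin (pi * (p%:R - q%:R) / n%:R) : R|.
Proof.
move=> pn qn pq.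
have pi0 : (0 : R) < pi := pi_gt0 R.
have nR : (0 : R) < n%:R by rewrite ltr0n (leq_ltn_trans _ pn).
have n0 : (n%:R : R) != 0 by rewrite gt_eqF.
set x0 := pi / (2 * n%:R).
have x00 : 0 < x0 by rewrite /x0 divr_gt0 // mulr_gt0.
have hpn : (p%:R : R) + 1 <= n%:R by rewrite natr1 ler_nat.
have hqn : (q%:R : R) + 1 <= n%:R by rewrite natr1 ler_nat.
have hp0 : (0 : R) <= p%:R by [].
have hq0 : (0 : R) <= q%:R by [].
have hpq : 1 <= `|p%:R - q%:R : R| <= n%:R - 1.
  case: (ltngtP p q) => h; last by rewrite h eqxx in pq.
    have h' : (p%:R : R) + 1 <= q%:R by rewrite natr1 ler_nat.
    rewrite ler0_norm; last by lra.
    apply/andP; split; lra.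
  have h' : (q%:R : R) + 1 <= p%:R by rewrite natr1 ler_nat.
  rewrite ger0_norm; last by lra.
  apply/andP; split; lra.
move/andP: hpq => [hpq1 hpq2].
set w := x0 * (p%:R - q%:R).
have ew : `|w| = x0 * `|p%:R - q%:R| by rewrite normrM (gtr0_norm x00).
have hw1 : x0 <= `|w|.
  by rewrite ew -[leLHS]mulr1 ler_pM2l.
have hw2 : `|w| < pi / 2.
  rewrite ew; apply: (@le_lt_trans _ _ (x0 * (n%:R - 1))).
    by rewrite ler_pM2l.
  have -> : pi / 2 = x0 * n%:R by rewrite /x0; field.
  by rewrite ltr_pM2l //; lra.
have [/andP[s0 sw] cw] := @sin_abs_lb R x0 w x00 hw1 hw2.
have e2 : pi * (p%:R - q%:R) / n%:R = w *+ 2 by rewrite mulr2n /w /x0; field.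
set u := x0 * p%:R. set v := x0 * q%:R.
have e1 : pi * (p%:R - 0) / n%:R = u *+ 2 by rewrite mulr2n /u /x0; field.
have e3 : pi * (0 - q%:R) / n%:R = - (v *+ 2) by rewrite mulr2n /v /x0; field.
have hu : 0 <= u *+ 2 <= pi.
  rewrite mulr2n /u /x0; apply/andP; split.
    by rewrite -mulr2n mulrn_wge0 // mulr_ge0 // ltW.
  have -> : (pi : R) / (2 * n%:R) * p%:R + pi / (2 * n%:R) * p%:R = pi * (p%:R / n%:R) by field.
  rewrite ler_piMr ?ltW // ltr_pdivrMr // mul1r; lra.
have hv : 0 <= v *+ 2 <= pi.
  rewrite mulr2n /v /x0; apply/andP; split.
    by rewrite -mulr2n mulrn_wge0 // mulr_ge0 // ltW.
  have -> : (pi : R) / (2 * n%:R) * q%:R + pi / (2 * n%:R) * q%:R = pi * (q%:R / n%:R) by field.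
  rewrite ler_piMr ?ltW // ltr_pdivrMr // mul1r; lra.
rewrite e1 e2 e3 sinN normrN (ger0_norm (sin_ge0_pi hu)) (ger0_norm (sin_ge0_pi hv)).
have ew2 : `|sin (w *+ 2)| = 2 * `|sin w| * cos w.
  by rewrite sin2 normrM normrM (gtr0_norm cw) ger0_norm.
rewrite ew2; split; last by rewrite !mulr_gt0 //; lra.
have -> : sin (u *+ 2) + sin (v *+ 2) = 2 * sin (u + v) * cos w.
  rewrite !sin2 sinD /w (_ : x0 * (p%:R - q%:R) = u - v); last by rewrite /u /v; ring.
  rewrite cosB.
  have -> : 2 * (sin u * cos v + cos u * sin v) * (cos u * cos v + sin u * sin v) =
    2 * sin u * cos u * (cos v ^+ 2 + sin v ^+ 2) + 2 * sin v * cos v * (cos u ^+ 2 + sin u ^+ 2) by ring.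
  by rewrite !cos2Dsin2 !mulr1.
apply: (@le_trans _ _ (2 * cos w)).
  rewrite -mulrA ler_pM2l //; apply: ler_piMl; [exact: ltW | exact: sin_le1].
have -> : (sin x0)^-1 * (2 * `|sin w| * cos w) = 2 * cos w * (`|sin w| / sin x0) by ring.
apply: ler_peMr; first by rewrite mulr_ge0 // ltW.
by rewrite ler_pdivlMr // mul1r.
Qed.
End Trig.

Theorem lemma25 (R : realType) (n : nat) (a b r th : R) :
  (2 <= n)%N -> 0 < r ->
  exists e : rel 'I_n,
    is_spanning_tree e /\
    dilation e (circ_pts a b r th) <= 2 * n%:R / pi + pi / (2 * n%:R).
Proof.
case: n => [//|m] hn r0.
pose e := fun i j : 'I_m.+1 => (i != j) && ((i == ord0) || (j == ord0)).
exists e; split.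
  split.
  - by move=> i j; rewrite /e eq_sym orbC.
  - by move=> i; rewrite /e eqxx.
  - move=> i j; apply: (@connect_trans _ e ord0).
      case: (i =P ord0) => [->|/eqP hi]; first exact: connect0.
      by apply: connect1; rewrite /e hi eqxx orbT.
    case: (j =P ord0) => [->|/eqP hj]; first exact: connect0.
    by apply: connect1; rewrite /e eq_sym hj eqxx.
  - rewrite -(card_star m); apply: eq_card => p; rewrite [in RHS]inE /=; apply/idP/idP => h; [move: h; rewrite in_setE; exact | rewrite in_setE; exact: h].
have pi0 : (0 : R) < pi := pi_gt0 R.
have mR : (2 : R) <= m.+1%:R by rewrite (ler_nat R 2 m.+1).
set x0 := (pi : R) / (2 * m.+1%:R).
set B := 2 * m.+1%:R / pi + pi / (2 * m.+1%:R).
have x00 : 0 < x0 by rewrite /x0 divr_gt0 // mulr_gt0 //; lra.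
have x0h : x0 < pi / 2.
  rewrite /x0 ltr_pdivrMr; last by lra.
  have -> : (pi : R) / 2 * (2 * m.+1%:R) = pi * m.+1%:R by field.
  by rewrite ltr_pMr //; lra.
have sx0 : 0 < sin x0 by apply: sin_gt0_pihalf; rewrite x00 x0h.
have KB : (sin x0)^-1 <= B by apply: K_bound.
have K1 : 1 <= (sin x0)^-1 by rewrite invf_ge1 // sin_le1.
have B1 : 1 <= B by apply: le_trans KB.
rewrite /dilation; apply: (big_ind (fun y => y <= B)).
- lra.
- by move=> x y hx hy; rewrite ge_max hx hy.
move=> [i j] /= hij.
have hij' : (i : nat) != j by [].
have [hk hz] := @key R _ _ _ (ltn_ord i) (ltn_ord j) hij'.
have Ed := fun i j => @edist_circ R m.+1 a b r th i j (ltW r0).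
rewrite Ed ler_pdivrMr; last by rewrite !mulr_gt0.
case: (boolP ((i == ord0) || (j == ord0))) => h0.
  have hp : path e i [:: j] by rewrite /= /e hij h0.
  have := @td_le R _ e (circ_pts a b r th) _ _ hp; rewrite /= => h.
  apply: le_trans h _.
  rewrite /walk_len /= big_cons big_nil addr0 Ed.
  by apply: ler_peMl => //; rewrite !mulr_ge0 ?ltW.
move: h0; rewrite negb_or => /andP[hi hj].
have hp : path e i [:: ord0; j].
  by rewrite /= /e hi eqxx orbT eq_sym hj.
have := @td_le R _ e (circ_pts a b r th) _ _ hp; rewrite /= => h.
apply: le_trans h _.
rewrite /walk_len /= big_cons big_cons big_nil addr0 !Ed /=.
set Z := `|sin (pi * (i%:R - j%:R) / m.+1%:R)|.
rewrite -mulrDr.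
have r2 : 0 < 2 * r by rewrite mulr_gt0.
apply: (@le_trans _ _ (2 * r * ((sin x0)^-1 * Z))).
  by rewrite ler_pM2l.
have -> : B * (2 * r * Z) = 2 * r * (Z * B) by ring.
rewrite ler_pM2l // mulrC.
by apply: ler_wpM2l => //; apply: ltW.
Qed.
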